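(* Let $k\le l$ be positive integers with $\gcd(k,l)=1$, let $n\ge 1$ and $m\ge 0$ be integers, and write $m=qn+r$ with integers $q\ge 0$, $0\le r<n$. Let $x,y$ be integers satisfying $x\ge rk$, $y\ge rl$ and $qxy+r(xl+yk)\ge klnr$, chosen so that $x+y$ is the smallest possible among all such pairs. If $x+y\le nk$, then there exists $A\in\mathcal D^{k,l}(m,n)$ such that ${\rm tdet}(A)\le nkq+x+y$.
   Context: $\mathcal D^{k,l}(m,n)$ denotes the set of all $nk\times nl$ matrices with nonnegative integer entries all of whose row sums equal $ml$ and all of whose column sums equal $mk$. For an $s\times t$ matrix $A=(a_{ij})$ with $s\le t$, a transversal of $A$ is a set of entries $T=\{a_{1i_1},\dots,a_{si_s}\}$ with $i_1,\dots,i_s\in\{1,\dots,t\}$ pairwise distinct, and $|T|=a_{1i_1}+\cdots+a_{si_s}$; if $s>t$, the transversals of $A$ are those of its transpose. The tropical determinant is ${\rm tdet}(A)=\max_T|T|$ over all transversals $T$ of $A$. *)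

(* Defs.v *)
From mathcomp Require Import all_boot all_algebra.
Set Implicit Arguments. Unset Strict Implicit. Unset Printing Implicit Defensive.

Definition inD (k l m n : nat) (A : 'M[nat]_(n * k, n * l)) : Prop :=
  (forall i, \sum_(j < n * l) A i j = m * l) /\
  (forall j, \sum_(i < n * k) A i j = m * k).

(* Maximal weight of a transversal of an s x t matrix with s <= t:
   transversals correspond to injective maps rows -> columns. *)
Definition tdet_le (s t : nat) (A : 'M[nat]_(s, t)) : nat :=
  \max_(f : {ffun 'I_s -> 'I_t} | injectiveb f) \sum_(i < s) A i (f i).

Definition tdet (s t : nat) (A : 'M[nat]_(s, t)) : nat :=
  if s <= t then tdet_le A else tdet_le A^T.
Arguments inD : clear implicits.

(* Main.v *)
Require Import Defs.
From mathcomp Require Import all_boot all_algebra.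
From mathcomp Require Import zify.
From mathcomp Require Import zify.

Definition cnt (a len p i : nat) : nat := \sum_(a <= s < a + len) (s %% p == i).

Lemma cntD a l1 l2 p i : cnt a (l1 + l2) p i = cnt a l1 p i + cnt (a + l1) l2 p i.
Proof.
rewrite /cnt addnA (@big_cat_nat _ _ _ (a + l1)) //; lia.
Qed.

Lemma cnt1 a p i : cnt a 1 p i = (a %% p == i).
Proof. by rewrite /cnt addn1 big_nat1. Qed.

Lemma cnt0 a p i : cnt a 0 p i = 0.
Proof. by rewrite /cnt addn0 big_geq. Qed.

Lemma cnt_period a p i : 0 < p -> cnt a p p i = (i < p).
Proof.
move=> Hp; elim: a => [|a IH].
  rewrite /cnt add0n big_mkord.
  rewrite (eq_bigr (fun j : 'I_p => (val j == i) : nat)); last first.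
    by move=> j _; rewrite modn_small.
  case: (ltnP i p) => Hi.
    rewrite (bigD1 (Ordinal Hi)) //= eqxx big1 // => j Hj.
    case: (val j =P i) => // E; move/negP: Hj; case; apply/eqP; exact: val_inj.
  rewrite big1 // => j _; case: (val j =P i) => // E; case: j E => /= j Hj; lia.
have E1 := cntD a 1 p p i.
have E2 := cntD a p 1 p i.
rewrite addnC in E2. rewrite E2 !cnt1 in E1.
rewrite addn1 in E1.
have : (a + p) %% p = a %% p by rewrite -modnDmr modnn addn0.
move=> Hm; rewrite Hm in E1. lia.
Qed.

Lemma cnt_mul a p b i : 0 < p -> i < p -> cnt a (p * b) p i = b.
Proof.
move=> Hp Hi; elim: b a => [|b IH] a; first by rewrite muln0 cnt0.
by rewrite mulnS cntD cnt_period // Hi IH add1n.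
Qed.

Lemma cnt_le a len p b i : len <= p * b -> cnt a len p i <= b.
Proof.
move=> H.
case: p H => [|p] H.
  have -> : len = 0 by lia. by rewrite cnt0.
case: (ltnP i p.+1) => Hi.
  have := cnt_mul a p.+1 b i (ltn0Sn p) Hi.
  have -> : p.+1 * b = len + (p.+1 * b - len) by lia.
  rewrite cntD; lia.
rewrite /cnt big1 // => s _; case: (s %% p.+1 =P i) => // E.
have := ltn_pmod s (ltn0Sn p); lia.
Qed.

Lemma sum_ord_eq t p : t < p -> \sum_(i < p) ((t == i) : nat) = 1.
Proof.
move=> Ht; rewrite (bigD1 (Ordinal Ht)) //= eqxx big1 // => j Hj.
case: (t =P j) => // E; move/negP: Hj; case; apply/eqP; exact: val_inj.
Qed.

Lemma cnt_sum_i a len p : 0 < p -> \sum_(i < p) cnt a len p i = len.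
Proof.
move=> Hp; rewrite /cnt exchange_big /=.
rewrite (eq_bigr (fun _ => 1)); last by move=> s _; apply: sum_ord_eq; exact: ltn_pmod.
by rewrite sum_nat_const_nat muln1; lia.
Qed.

Lemma cnt_tele (D : nat -> nat) p i c :
  \sum_(j < c) cnt (\sum_(0 <= j' < j) D j') (D j) p i = cnt 0 (\sum_(0 <= j' < c) D j') p i.
Proof.
elim: c => [|c IH]; first by rewrite big_ord0 big_geq // cnt0.
by rewrite big_ord_recr /= IH big_nat_recr //= cntD.
Qed.

Lemma sum_lt N x : \sum_(i < N) ((i < x) : nat) = minn N x.
Proof.
elim: N => [|N IH]; first by rewrite big_ord0 min0n.
rewrite big_ord_recr /= IH; case: (ltnP N x) => H /=; lia.
Qed.

Lemma sum_bool_card (T : finType) (b : pred T) : \sum_(i : T) (b i : nat) = #|b|.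
Proof.
rewrite -sum1_card [RHS]big_mkcond /=; apply: eq_bigr => i _; rewrite unfold_in; by case: (b i).
Qed.

Lemma inj_count N M y (f : {ffun 'I_N -> 'I_M}) : injective f ->
  \sum_(i < N) ((f i < y) : nat) <= y.
Proof.
move=> finj.
rewrite (@sum_bool_card _ (fun i : 'I_N => f i < y)).
rewrite -(card_imset _ finj).
apply: (@leq_trans #|(fun j : 'I_M => j < y)|).
  apply: subset_leq_card; apply/subsetP => j /imsetP [i Hi ->]. exact: Hi.
rewrite -(@sum_bool_card _ (fun j : 'I_M => j < y)) sum_lt; lia.
Qed.

Definition EE q p rl y j := q * p + (if j < y then cnt 0 (p * rl) y j else 0).
Definition DD mk q p rl y j := mk - EE q p rl y j.
Definition aa x q p rl y mk i j :=
  if i < x then cnt (\sum_(0 <= j' < j) DD mk q p rl y j') (DD mk q p rl y j) x i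
  else cnt (\sum_(0 <= j' < j) EE q p rl y j') (EE q p rl y j) p (i - x).

Lemma sum_c M y P : y <= M -> (0 < y \/ P = 0) ->
  \sum_(0 <= j < M) (if j < y then cnt 0 P y j else 0) = P.
Proof.
move=> HyM Hy.
rewrite (@big_cat_nat _ _ _ y) //=.
rewrite [X in _ + X]big1_seq ?addn0; last first.
  move=> j /andP [_]; rewrite mem_index_iota => /andP [H1 _]; by rewrite ltnNge H1.
rewrite (eq_big_nat _ _ (F2 := fun j => cnt 0 P y j)); last first.
  by move=> j /andP [_ ->].
case: Hy => [Hy|->].
  by rewrite big_mkord cnt_sum_i.
by rewrite big1 // => j _; rewrite cnt0.
Qed.

Theorem proposition3p2 (k l n m q r x y : nat) :
  0 < k -> k <= l -> coprime k l -> 1 <= n ->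
  m = q * n + r -> r < n ->
  r * k <= x -> r * l <= y ->
  k * l * n * r <= q * x * y + r * (x * l + y * k) ->
  (forall x' y' : nat, r * k <= x' -> r * l <= y' ->
     k * l * n * r <= q * x' * y' + r * (x' * l + y' * k) ->
     x + y <= x' + y') ->
  x + y <= n * k ->
  exists A : 'M[nat]_(n * k, n * l),
    inD k l m n A /\ tdet A <= n * k * q + x + y.
Proof.
move=> Hk Hkl _ Hn Hm Hrn Hx Hy Hc _ Hxy.
set N := n * k. set M := n * l.
set p := N - x. set rl := r * l. set mk := m * k.
have HNp : N = x + p by rewrite /p; lia.
have HNM : N <= M by rewrite /N /M leq_mul2l Hkl orbT.
have HyM : y <= M by lia.
have Hmk : mk = q * N + r * k by rewrite /mk /N Hm; lia.
have Hml : m * l = q * M + rl by rewrite /M /rl Hm; lia.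
have Hprl : p * rl <= y * (q * x + r * k).
  have : (x + p) * rl <= q * x * y + r * (x * l + y * k) by rewrite -HNp /N /rl; lia.
  rewrite /rl; nia.
have HyP : 0 < y \/ p * rl = 0.
  case: (posnP y) => H; last by left.
  right; rewrite /rl; lia.
pose E := EE q p rl y. pose D := DD mk q p rl y.
have FE_le j : E j <= mk.
  rewrite /E /EE; case: ifP => _; last by lia.
  have := @cnt_le 0 _ _ _ j Hprl; lia.
have FE_le2 j : E j <= p * (q + (j < y)).
  rewrite /E /EE; case: ifP => Hj /=; first last.
    by rewrite !addn0 mulnC.
  rewrite addn1.
  have : p * rl <= y * p by rewrite mulnC leq_mul2r Hy orbT.
  move/(@cnt_le 0 _ _ _ j); lia.
have FD_le j : D j <= x * q.+1.
  rewrite /D /DD; have := FE_le j; rewrite -/(E j) /E /EE; lia.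
have FE_sum : \sum_(0 <= j < M) E j = p * (m * l).
  rewrite /E /EE big_split /= sum_nat_const_nat sum_c //; rewrite Hml; lia.
have FD_sum : \sum_(0 <= j < M) D j = x * (m * l).
  have : \sum_(0 <= j < M) (D j + E j) = M * mk.
    rewrite (eq_bigr (fun _ => mk)); last by move=> j _; rewrite /D /DD subnK // FE_le.
    by rewrite sum_nat_const_nat subn0.
  rewrite big_split /= FE_sum.
  have -> : M * mk = (x + p) * (m * l) by rewrite -HNp /mk /N /M; lia.
  lia.
pose A : 'M[nat]_(N, M) := (\matrix_(i < N, j < M) aa x q p rl y mk i j)%R.
exists A; split; first split.
- move=> i.
  rewrite (eq_bigr (fun j : 'I_M => aa x q p rl y mk i j)); last by move=> j _; rewrite mxE.
  case: (ltnP i x) => Hi.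
    rewrite (eq_bigr (fun j : 'I_M => cnt (\sum_(0 <= j' < j) D j') (D j) x i)); last first.
      by move=> j _; rewrite /aa Hi.
    rewrite (cnt_tele D) FD_sum cnt_mul //; lia.
  rewrite (eq_bigr (fun j : 'I_M => cnt (\sum_(0 <= j' < j) E j') (E j) p (i - x))); last first.
      by move=> j _; rewrite /aa ltnNge Hi.
  have Hi2 : i - x < p by have := ltn_ord i; rewrite /p /N; lia.
  rewrite (cnt_tele E) FE_sum cnt_mul //; lia.
- move=> j.
  rewrite (eq_bigr (fun i : 'I_N => aa x q p rl y mk i j)); last by move=> i _; rewrite mxE.
  rewrite -(big_mkord xpredT (fun i => aa x q p rl y mk i j)).
  rewrite (@big_cat_nat _ _ _ x) /=; [|lia|lia].
  rewrite (eq_big_nat _ _ (F2 := fun i => cnt (\sum_(0 <= j' < j) D j') (D j) x i)); last first.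
    by move=> i /andP [_ Hi]; rewrite /aa Hi.
  have Hsh : forall F : nat -> nat, \sum_(x <= i < N) F i = \sum_(0 <= i < N - x) F (i + x).
    by move=> F; rewrite -{1}[x]add0n big_addn.
  rewrite Hsh.
  rewrite (eq_big_nat _ _ (F1 := fun i => aa x q p rl y mk (i + x) j) (F2 := fun i => cnt (\sum_(0 <= j' < j) E j') (E j) p i)); last first.
    by move=> i /andP [_ Hi]; rewrite /aa ltnNge leq_addl /= addnK.
  have -> : N - x = p by [].
  have -> : \sum_(0 <= i < x) cnt (\sum_(0 <= j' < j) D j') (D j) x i = D j.
    case: (posnP x) => Hx0.
      have := FD_le j; rewrite Hx0 mul0n leqn0 => /eqP ->.
      by rewrite big_geq.
    by rewrite big_mkord cnt_sum_i.
  have -> : \sum_(0 <= i < p) cnt (\sum_(0 <= j' < j) E j') (E j) p i = E j.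
    case: (posnP p) => Hp0.
      have := FE_le2 j; rewrite Hp0 mul0n leqn0 => /eqP ->.
      by rewrite big_geq.
    by rewrite big_mkord cnt_sum_i.
  rewrite /D /DD subnK ?FE_le //.
- rewrite /tdet HNM /tdet_le; apply/bigmax_leqP => f /injectiveP finj.
  apply: (@leq_trans (\sum_(i < N) (q + ((i < x) : nat) + ((f i < y) : nat)))).
    apply: leq_sum => i _; rewrite mxE /aa; case: ifP => Hi.
      have := @cnt_le (\sum_(0 <= j' < f i) D j') _ x q.+1 i (FD_le (f i)).
      by move=> H; apply: (leq_trans H); rewrite /= addn1 leq_addr.
    have := @cnt_le (\sum_(0 <= j' < f i) E j') _ p _ (i - x) (FE_le2 (f i)).
    by move=> H; apply: (leq_trans H); rewrite /= addn0.
  rewrite !big_split /= sum_nat_const card_ord sum_lt.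
  have H := @inj_count _ _ y _ finj.
  rewrite -!addnA leq_add2l; apply: leq_add; [exact: geq_minr | exact: H].
Qed.
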